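(* Let $s\ge0$ and let $V_1,\ldots,V_n$ be vector subspaces of a finite-dimensional real vector space, each $V_i$ with a fixed generating set $\{v^i_1,\ldots,v^i_{m_i}\}$. Consider the polyhedron $$P=\Big\{(d_1,\ldots,d_n)\in\mathbb R^n:\ d_1\ge0,\ldots,d_n\ge0,\ \sum_{i\in I}d_i+\dim\Big(\sum_{i\in I^c}V_i\Big)\ge s\ \text{for all } I\subset\{1,\ldots,n\}\Big\}.$$ Then every vertex of $P$ is of the form $\widehat J(i)$ for some $(J,i)\in\overline{\mathbb J}$.
   Context: $I^c=\{1,\ldots,n\}\setminus I$; $\sum_{i\in\emptyset}d_i=0$ and the empty sum of subspaces is $\{0\}$. $\mathbb J$ is the family of all tuples $J=(\mathrm j_1,\ldots,\mathrm j_n)$ with $\mathrm j_i\subset\{v^i_1,\ldots,v^i_{m_i}\}$ such that the family formed by all elements of $\mathrm j_1,\ldots,\mathrm j_n$ taken together is linearly independent and $\#\mathrm j_1+\cdots+\#\mathrm j_n\ge s$. For $J\in\mathbb J$, $i\in\{1,\ldots,n\}$, $\widehat J(i)=(\#\mathrm j_1,\ldots,\#\mathrm j_n)+(s-(\#\mathrm j_1+\cdots+\#\mathrm j_n))e_i$ with $e_i$ the canonical basis of $\mathbb R^n$, and $\overline{\mathbb J}=\{(J,i): J\in\mathbb J,\ \widehat J(i)\ge 0 \text{ coordinatewise}\}$. *)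

(* Defs.v *)
From HB Require Import structures.
From mathcomp Require Import all_boot all_order all_algebra.
Unset Printing Implicit Defensive.
Import Order.TTheory GRing.Theory Num.Theory.
Local Open Scope ring_scope.

Section Polyhedron.
Variables (R : realFieldType) (V : vectType R) (n : nat) (m : 'I_n -> nat)
  (v : forall i : 'I_n, 'I_(m i) -> V) (s : R).

Definition Vsp (i : 'I_n) : {vspace V} := (<< [seq v i a | a <- enum 'I_(m i)] >>)%VS.

Definition inP (d : 'rV[R]_n) : Prop :=
  (forall k, 0 <= d 0 k) /\
  (forall I : {set 'I_n},
     s <= \sum_(k in I) d 0 k + (\dim (\sum_(k in ~: I) Vsp k)%VS)%:R).

Definition is_vertex (P : 'rV[R]_n -> Prop) (d : 'rV[R]_n) : Prop :=
  P d /\ forall (x y : 'rV[R]_n) (t : R), P x -> P y -> 0 < t -> t < 1 ->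
    d = t *: x + (1 - t) *: y -> x = y.

Definition Jfam (J : forall i : 'I_n, {set 'I_(m i)}) : seq V :=
  flatten [seq [seq v k a | a <- enum (J k)] | k <- enum 'I_n].

Definition Jtot (J : forall i : 'I_n, {set 'I_(m i)}) : nat := (\sum_k #|J k|)%N.

Definition inJJ (J : forall i : 'I_n, {set 'I_(m i)}) : Prop :=
  free (Jfam J) /\ s <= (Jtot J)%:R.

Definition Jhat (J : forall i : 'I_n, {set 'I_(m i)}) (i : 'I_n) : 'rV[R]_n :=
  \row_k ((#|J k|)%:R + (k == i)%:R * (s - (Jtot J)%:R)).

Definition inJbar (J : forall i : 'I_n, {set 'I_(m i)}) (i : 'I_n) : Prop :=
  inJJ J /\ forall k, 0 <= Jhat J i 0 k.

End Polyhedron.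

(* Main.v *)
Require Import Defs.
From HB Require Import structures.
From mathcomp Require Import all_boot all_order all_algebra.
From mathcomp Require Import ring lra.
Import Order.TTheory GRing.Theory Num.Theory.
Local Open Scope ring_scope.

Section LA.
Variables (R : realFieldType) (V : vectType R) (n : nat) (m : 'I_n -> nat)
  (v : forall i : 'I_n, 'I_(m i) -> V).

Definition G (j : 'I_n) (A : {set 'I_(m j)}) : {vspace V} :=
  (\sum_(a in A) <[v j a]>)%VS.

Definition S (W : {set 'I_n}) : {vspace V} := (\sum_(k in W) Vsp R V n m v k)%VS.

Lemma VspE j : Vsp R V n m v j = G j setT.
Proof.
rewrite /Vsp /G span_def big_map big_enum; apply: eq_bigl => a; by rewrite in_setT.
Qed.

Lemma GE j (A : {set 'I_(m j)}) : G j A = <<[seq v j a | a <- enum A]>>%VS.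
Proof. by rewrite span_def big_map big_enum. Qed.

Lemma G0 j : G j set0 = 0%VS.
Proof. by rewrite /G big_set0. Qed.

Lemma G_sub j (A : {set 'I_(m j)}) : (G j A <= Vsp R V n m v j)%VS.
Proof.
rewrite VspE; apply/subv_sumP => a Aa; exact: (sumv_sup a).
Qed.

Lemma add_line_dim (U : {vspace V}) x : x \notin U ->
  \dim (U + <[x]>) = (\dim U + 1)%N.
Proof.
move=> xU.
have x0 : x != 0 by apply: contra xU => /eqP ->; rewrite mem0v.
have cap0 : (U :&: <[x]> = 0)%VS.
  apply/eqP; rewrite -subv0; apply/subvP => y /memv_capP [yU /vlineP [c yE]]; rewrite yE in yU *.
  case: (eqVneq c 0) => [->|c0]; first by rewrite scale0r memv0.
  have := memvZ c^-1 yU; rewrite scalerA mulVf // scale1r => xU'.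
  by rewrite xU' in xU.
by rewrite dimv_disjoint_sum // dim_vline x0.
Qed.

Lemma LA (U : {vspace V}) j : exists A : {set 'I_(m j)},
  (U + G j A = U + Vsp R V n m v j)%VS /\ \dim (U + G j A) = (\dim U + #|A|)%N.
Proof.
pose P (A : {set 'I_(m j)}) := \dim (U + G j A) == (\dim U + #|A|)%N.
have P0 : P set0 by rewrite /P G0 addv0 cards0 addn0.
case: (arg_maxnP (fun A : {set 'I_(m j)} => #|A|) P0) => A PA Amax.
exists A; split; last exact/eqP.
apply/eqP; rewrite eqEsubv; apply/andP; split.
  by apply: addvS => //; exact: G_sub.
rewrite subv_add addvSl /= VspE; apply/subv_sumP => a _.
rewrite -memvE; apply/negPn/negP => Hna.
have aA : a \notin A.
  apply: contra Hna => aA; rewrite memvE; apply: subv_trans (addvSr _ _).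
  exact: (sumv_sup a).
have e : (U + G j (a |: A) = (U + G j A) + <[v j a]>)%VS.
  by rewrite {1}/G big_setU1 //= [(<[_]> + _)%VS]addvC addvA.
have := Amax (a |: A); rewrite /P e add_line_dim // (eqP PA) cardsU1 aA.
by rewrite add1n addn1 addnS eqxx => /(_ isT); rewrite /= ltnn.
Qed.

Lemma S_mono (A B : {set 'I_n}) : A \subset B -> (S A <= S B)%VS.
Proof.
move=> AB; apply/subv_sumP => k kA; apply: (sumv_sup k) => //; exact: (subsetP AB).
Qed.

Lemma S_setU (A B : {set 'I_n}) : S (A :|: B) = (S A + S B)%VS.
Proof.
apply/eqP; rewrite eqEsubv; apply/andP; split.
  apply/subv_sumP => k; rewrite in_setU => /orP [kA|kB].
    by apply: subv_trans (addvSl _ _); apply: (sumv_sup k).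
  by apply: subv_trans (addvSr _ _); apply: (sumv_sup k).
by rewrite subv_add !S_mono // ?subsetUl ?subsetUr.
Qed.

Lemma S_set0 : S set0 = 0%VS.
Proof. by rewrite /S big_set0. Qed.

Lemma S_setU1 k (A : {set 'I_n}) : S (k |: A) = (Vsp R V n m v k + S A)%VS.
Proof.
rewrite S_setU; congr (_ + _)%VS; rewrite /S big_set1 //.
Qed.

Definition r (W : {set 'I_n}) : nat := \dim (S W).

Lemma r_mono (A B : {set 'I_n}) : A \subset B -> (r A <= r B)%N.
Proof. by move=> AB; apply: dimvS; apply: S_mono. Qed.

Lemma r_submod (A B : {set 'I_n}) : (r (A :|: B) + r (A :&: B) <= r A + r B)%N.
Proof.
rewrite /r S_setU -(dimv_sum_cap (S A) (S B)) leq_add2l; apply: dimvS.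
by rewrite subv_cap !S_mono // ?subsetIl ?subsetIr.
Qed.

Lemma r_set0 : r set0 = 0%N.
Proof. by rewrite /r S_set0 dimv0. Qed.

Lemma span_Jfam (J : forall i : 'I_n, {set 'I_(m i)}) :
  <<Jfam R V n m v J>>%VS = (\sum_j G j (J j))%VS.
Proof.
rewrite span_def /Jfam big_flatten /= big_map big_enum; apply: eq_bigr => j _.
by rewrite big_map big_enum.
Qed.

Lemma size_Jfam (J : forall i : 'I_n, {set 'I_(m i)}) :
  size (Jfam R V n m v J) = Jtot n m J.
Proof.
rewrite /Jfam size_flatten /shape -map_comp sumnE big_map big_enum.
by apply: eq_bigr => j _; rewrite /= size_map cardE.
Qed.

End LA.

Section Poly.
Variables (R : realFieldType) (V : vectType R) (n : nat) (m : 'I_n -> nat)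
  (v : forall i : 'I_n, 'I_(m i) -> V) (s : R).

Local Notation rr := (r R V n m v).
Local Notation inPs := (inP R V n m v s).

Definition sumd (d : 'rV[R]_n) (I : {set 'I_n}) : R := \sum_(k in I) d 0 k.
Definition slack d I : R := sumd d I + (rr (~: I))%:R - s.

Lemma slack_ge0 d : inPs d -> forall I, 0 <= slack d I.
Proof. by case=> _ H I; rewrite /slack subr_ge0; exact: H. Qed.

Lemma exists_delta (T : finType) (P : pred T) (f : T -> R) :
  (forall x, P x -> 0 < f x) -> exists2 e, 0 < e & forall x, P x -> e <= f x.
Proof.
move=> Hf.
suff: forall l : seq T, exists2 e, 0 < e & forall x, x \in l -> P x -> e <= f x.
  by case/(_ (enum T)) => e e0 He; exists e => // x; apply: He; rewrite mem_enum.
elim=> [|x l [e e0 He]]; first by exists 1.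
case Px: (P x).
  exists (Num.min e (f x)); first by rewrite lt_min e0 Hf.
  move=> y; rewrite inE => /orP [/eqP -> _|yl Py]; first by rewrite ge_min lexx orbT.
  by rewrite ge_min He.
exists e => // y; rewrite inE => /orP [/eqP -> |yl Py]; first by rewrite Px.
exact: He.
Qed.

Lemma perturb d (z : 'rV[R]_n) : is_vertex R n inPs d ->
  (forall k, d 0 k = 0 -> z 0 k = 0) ->
  (forall I, slack d I = 0 -> \sum_(k in I) z 0 k = 0) -> z = 0.
Proof.
case=> Pd Vx Hz HI.
have sl0 := slack_ge0 d Pd.
have [nn _] := Pd.
have [e1 e10 He1] : exists2 e, 0 < e & forall I, slack d I != 0 -> e <= slack d I.
  by apply: exists_delta => I HI0; rewrite lt0r HI0 sl0.
have [e2 e20 He2] : exists2 e, 0 < e & forall k, d 0 k != 0 -> e <= d 0 k.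
  by apply: exists_delta => k Hk; rewrite lt0r Hk nn.
pose e := Num.min e1 e2.
have e0 : 0 < e by rewrite lt_min e10 e20.
pose C := 1 + \sum_k `|z 0 k|.
have C0 : 0 < C by rewrite ltr_wpDr ?sumr_ge0 // => k _; rewrite normr_ge0.
pose eps := e / C.
have eps0 : 0 < eps by rewrite divr_gt0.
have bnd : forall (I : {set 'I_n}), eps * `|\sum_(k in I) z 0 k| <= e.
  move=> I; have -> : e = eps * C by rewrite /eps mulfVK // gt_eqF.
  rewrite ler_wpM2l ?(ltW eps0) //; apply: le_trans (ler_norm_sum _ _ _) _.
  rewrite /C; apply: le_trans (ler_wpDl ler01 (lexx _)).
  rewrite [X in _ <= X](bigID (fun k => k \in I)) /= ler_wpDr //.
  by rewrite sumr_ge0 // => k _; rewrite normr_ge0.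
have bndk : forall k, eps * `|z 0 k| <= e.
  move=> k; have := bnd [set k]; by rewrite big_set1.
have good : forall t, `|t| <= eps -> inPs (d + t *: z).
  move=> t Ht; split.
    move=> k; rewrite !mxE.
    case: (eqVneq (d 0 k) 0) => [dk|dk]; first by rewrite dk (Hz _ dk) mulr0 addr0.
    have h1 : `|t * z 0 k| <= e.
      by rewrite normrM; apply: le_trans (bndk k); rewrite ler_wpM2r ?normr_ge0.
    have h2 := He2 k dk.
    have h3 : e <= e2 by rewrite ge_min lexx orbT.
    move: h1; rewrite ler_norml => /andP [h1 _]; lra.
  move=> I.
  have -> : \sum_(k in I) (d + t *: z) 0 k = sumd d I + t * \sum_(k in I) z 0 k.
    by rewrite /sumd mulr_sumr -big_split; apply: eq_bigr => k _; rewrite !mxE.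
  have := sl0 I; rewrite /slack => hs.
  case: (eqVneq (slack d I) 0) => [s0|s0].
    rewrite (HI _ s0) mulr0 addr0; move: hs; rewrite /slack /r /S; lra.
  have h1 : `|t * \sum_(k in I) z 0 k| <= e.
    by rewrite normrM; apply: le_trans (bnd I); rewrite ler_wpM2r ?normr_ge0.
  have h2 := He1 I s0.
  have h3 : e <= e1 by rewrite ge_min lexx.
  move: h1 h2; rewrite ler_norml /slack /r /S => /andP [h1 _] h2; lra.
have Px := good eps; have Py := good (- eps).
have epsn : `|eps| <= eps by rewrite ger0_norm ?(ltW eps0).
have := Vx _ _ (2^-1) (Px epsn) (Py _).
rewrite normrN => /(_ epsn).
have h2 : (0 : R) < 2^-1 by rewrite invr_gt0 ltr0n.
have h2' : (2^-1 : R) < 1 by rewrite invf_lt1 ?ltr0n // ltr1n.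
move=> /(_ h2 h2').
have : d = 2^-1 *: (d + eps *: z) + (1 - 2^-1) *: (d + - eps *: z).
  apply/rowP => k; rewrite !mxE.
  have h20 : (2 : R) != 0 by rewrite pnatr_eq0.
  by field.
move=> E /(_ E) /rowP H; apply/rowP => k; have := H k; rewrite !mxE => Hk.
have : eps * z 0 k = 0 by lra.
by move/eqP; rewrite mulf_eq0 (gt_eqF eps0) /= => /eqP.
Qed.

Lemma sumC (f : 'I_n -> R) (I : {set 'I_n}) :
  \sum_k f k = \sum_(k in I) f k + \sum_(k in ~: I) f k.
Proof. by rewrite (bigID (mem I)) /=; congr (_ + _); apply: eq_bigl => k; rewrite inE. Qed.

Lemma sum_mod (f : 'I_n -> R) (A B : {set 'I_n}) :
  \sum_(k in A :|: B) f k + \sum_(k in A :&: B) f k =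
  \sum_(k in A) f k + \sum_(k in B) f k.
Proof.
rewrite !(big_mkcond (fun k => k \in _)) -!big_split; apply: eq_bigr => k _ /=.
rewrite in_setU in_setI; case: (k \in A); case: (k \in B) => /=; ring.
Qed.

Lemma sum_sub (f : 'I_n -> R) (W Y : {set 'I_n}) : W \subset Y ->
  (forall k, k \in Y -> k \notin W -> f k = 0) ->
  \sum_(k in Y) f k = \sum_(k in W) f k.
Proof.
move=> WY H; rewrite (bigID (mem W)) /= [X in _ + X]big1 ?addr0.
  by apply: eq_bigl => k; rewrite andb_idl // => kW; apply: (subsetP WY).
by move=> k /andP [kY kW]; apply: H.
Qed.

Definition ev (k : 'I_n) : 'rV[R]_n := \row_j ((j == k)%:R).

Lemma ev_sum k (I : {set 'I_n}) : k \notin I -> \sum_(j in I) ev k 0 j = 0.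
Proof.
by move=> kI; apply: big1 => j jI; rewrite mxE; case: eqP => // E; rewrite -E jI in kI.
Qed.

Lemma ev_neq0 k : ev k != 0.
Proof. by apply/eqP => /rowP /(_ k); rewrite !mxE eqxx => /eqP; rewrite oner_eq0. Qed.

Lemma zero_out d k : is_vertex R n inPs d ->
  (forall I, slack d I = 0 -> k \notin I) -> d 0 k = 0.
Proof.
move=> Vd H; apply/eqP/negPn/negP => dk.
have E : ev k = 0.
  apply: (@perturb d (ev k) Vd); last by move=> I HI; apply: ev_sum; apply: H.
  move=> j dj; rewrite mxE; case: eqP => // E; by move: dk; rewrite -E dj eqxx.
by move: (ev_neq0 k); rewrite E eqxx.
Qed.

Lemma tight_closed d I I' : inPs d -> slack d I = 0 -> slack d I' = 0 ->
  slack d (I :|: I') = 0 /\ slack d (I :&: I') = 0.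
Proof.
move=> Pd h1 h2.
have hr : (rr (~: (I :|: I')))%:R + (rr (~: (I :&: I')))%:R
          <= (rr (~: I))%:R + (rr (~: I'))%:R :> R.
  by rewrite -!natrD ler_nat setCU setCI addnC r_submod.
have hs := sum_mod (fun k => d 0 k) I I'.
have g1 := slack_ge0 d Pd (I :|: I'); have g2 := slack_ge0 d Pd (I :&: I').
move: h1 h2 g1 g2; rewrite /slack /sumd => h1 h2 g1 g2; split; lra.
Qed.

Lemma rrCT : rr (~: setT) = 0%N.
Proof. by rewrite setCT r_set0. Qed.

Lemma sumT d : 0 <= s -> is_vertex R n inPs d -> sumd d setT = s.
Proof.
move=> s0 Vd; have [Pd _] := Vd.
have gT := slack_ge0 d Pd setT; move: gT; rewrite /slack rrCT => gT.
case: (pickP (fun I : {set 'I_n} => slack d I == 0)) => [I1 t1 | none].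
  pose P := fun I : {set 'I_n} => slack d I == 0.
  have P1 : P I1 by [].
  case: (arg_maxnP (fun I : {set 'I_n} => #|I|) P1) => I0 /eqP t0 Imax.
  have sub : forall I, slack d I = 0 -> I \subset I0.
    move=> I tI; have [tU _] := tight_closed _ _ _ Pd tI t0.
    have H := Imax (I :|: I0) (introT eqP tU).
    have /eqP E : I0 == I :|: I0 by rewrite eqEcard subsetUr; exact: H.
    by rewrite E subsetUl.
  have z0 : forall k, k \notin I0 -> d 0 k = 0.
    move=> k kI; apply: zero_out Vd _ => I tI; apply: contra kI; exact: (subsetP (sub I tI)).
  have ST : sumd d setT = sumd d I0.
    rewrite /sumd (@sum_sub _ I0) ?subsetT // => k _; exact: z0.
  move: t0 gT; rewrite /slack ST => t0 gT.
  have : 0 <= (rr (~: I0))%:R :> R by rewrite ler0n.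
  lra.
have z0 : forall k, d 0 k = 0.
  move=> k; apply: zero_out Vd _ => I tI; have := none I; by rewrite tI eqxx.
have ST : sumd d setT = 0 by rewrite /sumd big1.
have := none setT; rewrite /slack rrCT ST.
move: gT; rewrite ST => gT.
have -> : s = 0 by lra.
by rewrite !addr0 subr0 eqxx.
Qed.

Definition tW d W := sumd d W == (rr W)%:R.

Lemma sumdT d : sumd d setT = \sum_k d 0 k.
Proof. by apply: eq_bigl => k; rewrite in_setT. Qed.

Lemma slackC d W : sumd d setT = s -> slack d (~: W) = (rr W)%:R - sumd d W.
Proof.
move=> ST; rewrite /slack setCK -ST sumdT (sumC _ W) /sumd; ring.
Qed.

Lemma le_r d : inPs d -> sumd d setT = s -> forall W, sumd d W <= (rr W)%:R.
Proof.
move=> Pd ST W; have := slack_ge0 d Pd (~: W); rewrite slackC //; lra.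
Qed.

Lemma tW_closed d W W' : inPs d -> sumd d setT = s -> tW d W -> tW d W' ->
  tW d (W :|: W') /\ tW d (W :&: W').
Proof.
move=> Pd ST /eqP h1 /eqP h2.
have hr : (rr (W :|: W'))%:R + (rr (W :&: W'))%:R
          <= (rr W)%:R + (rr W')%:R :> R.
  by rewrite -!natrD ler_nat r_submod.
have hs := sum_mod (fun k => d 0 k) W W'.
have g1 := le_r d Pd ST (W :|: W'); have g2 := le_r d Pd ST (W :&: W').
move: h1 h2 g1 g2; rewrite /tW /sumd => h1 h2 g1 g2; split; apply/eqP; lra.
Qed.

Lemma perturbW d (z : 'rV[R]_n) : 0 <= s -> is_vertex R n inPs d ->
  (forall k, d 0 k = 0 -> z 0 k = 0) -> \sum_k z 0 k = 0 ->
  (forall W, tW d W -> \sum_(k in W) z 0 k = 0) -> z = 0.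
Proof.
move=> s0 Vd Hz zT HW; have ST := sumT d s0 Vd; have [Pd _] := Vd.
apply: (@perturb d z Vd) => // I tI.
have : tW d (~: I).
  by apply/eqP; move: tI; rewrite -{1}(setCK I) slackC //; lra.
move/HW => h; move: zT; rewrite (sumC _ I) h; lra.
Qed.

Lemma sandwich d (W Y : {set 'I_n}) : inPs d -> sumd d setT = s -> tW d Y -> W \subset Y ->
  (forall k, k \in Y -> k \notin W -> d 0 k = 0) -> tW d W.
Proof.
move=> Pd ST /eqP tY WY H.
have E : sumd d Y = sumd d W by rewrite /sumd (sum_sub _ _ _ WY).
have h1 := le_r d Pd ST W.
have h2 : (rr W)%:R <= (rr Y)%:R :> R by rewrite ler_nat; apply: r_mono.
apply/eqP; lra.
Qed.

Lemma ev_sumin k (I : {set 'I_n}) : \sum_(j in I) ev k 0 j = (k \in I)%:R.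
Proof.
case kI: (k \in I); last by rewrite ev_sum // kI.
rewrite (bigD1 k) //= mxE eqxx big1 ?addr0 // => j /andP [_ jk]; by rewrite mxE (negbTE jk).
Qed.

Lemma ev_sumT k : \sum_j ev k 0 j = 1.
Proof.
have := ev_sumin k setT; rewrite in_setT => E.
rewrite (_ : 1 = (true%:R : R)) // -E.
by apply: eq_bigl => j; rewrite in_setT.
Qed.

Lemma tW0 d : tW d set0.
Proof. by rewrite /tW /sumd big_set0 r_set0. Qed.

Lemma step d X : 0 <= s -> is_vertex R n inPs d -> tW d X -> X != set0 ->
  exists2 k, k \in X & tW d (X :\ k).
Proof.
move=> s0 Vd tX X0; have ST := sumT d s0 Vd; have [Pd _] := Vd.
case: (pickP (fun k => (k \in X) && (d 0 k == 0))) => [k /andP [kX /eqP dk] | allpos].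
  exists k => //; apply: (sandwich _ _ _ Pd ST tX (subD1set X k)) => j jX jn.
  by move: jn; rewrite in_setD1 jX andbT negbK => /eqP ->.
pose P := fun Y => tW d Y && (Y \proper X).
have P0 : P set0 by rewrite /P tW0 proper0.
case: (arg_maxnP (fun Y : {set 'I_n} => #|Y|) P0) => Y /andP [tY YX] Ymax.
have [YsX [k kX kY]] := properP YX.
have pos : forall j, j \in X -> d 0 j != 0.
  by move=> j jX; have := allpos j; rewrite jX /= => ->.
have uniq : forall l, l \in X -> l \notin Y -> l = k.
  move=> l lX lY; apply/eqP/negPn/negP => lk.
  pose z := ev k - ev l.
  have : z = 0.
    apply: (@perturbW d z s0 Vd).
    - move=> j dj; rewrite !mxE.
      have jk : j != k by apply/eqP => E; move: (pos k kX); rewrite -E dj eqxx.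
      have jl : j != l by apply/eqP => E; move: (pos l lX); rewrite -E dj eqxx.
      by rewrite (negbTE jk) (negbTE jl) subrr.
    - rewrite (eq_bigr (fun j => ev k 0 j - ev l 0 j)); last by move=> j _; rewrite !mxE.
      by rewrite sumrB !ev_sumT subrr.
    move=> W tWW.
    rewrite (eq_bigr (fun j => ev k 0 j - ev l 0 j)); last by move=> j _; rewrite !mxE.
    rewrite sumrB !ev_sumin.
    have [tI _] := tW_closed _ _ _ Pd ST tWW tX.
    have [_ tZ0] := tW_closed _ _ _ Pd ST tWW tX.
    have [tZ _] := tW_closed _ _ _ Pd ST tY tZ0.
    have ZX : Y :|: (W :&: X) \subset X by rewrite subUset (proper_sub YX) subsetIr.
    case: (eqVneq (Y :|: (W :&: X)) X) => [E|NE].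
      have kW : k \in W.
        have : k \in Y :|: (W :&: X) by rewrite E.
        by rewrite in_setU (negbTE kY) /= in_setI => /andP [].
      have lW : l \in W.
        have : l \in Y :|: (W :&: X) by rewrite E.
        by rewrite in_setU (negbTE lY) /= in_setI => /andP [].
      by rewrite kW lW subrr.
    have HZ : P (Y :|: (W :&: X)) by rewrite /P tZ properEneq NE ZX.
    have /eqP EY : Y == Y :|: (W :&: X) by rewrite eqEcard subsetUl; exact: Ymax _ HZ.
    have kW : k \notin W.
      apply: contra kY => kW; rewrite EY in_setU in_setI kW kX orbT //.
    have lW : l \notin W.
      apply: contra lY => lW; rewrite EY in_setU in_setI lW lX orbT //.
    by rewrite (negbTE kW) (negbTE lW) subrr.
  move/rowP/(_ k); rewrite !mxE eqxx.
  have : (k == l) = false by apply/negP => /eqP E; rewrite E eqxx in lk.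
  by move=> ->; rewrite subr0 => /eqP; rewrite oner_eq0.
exists k => //.
have -> : X :\ k = Y; last by [].
apply/eqP; rewrite eqEsubset; apply/andP; split.
  apply/subsetP => j; rewrite in_setD1 => /andP [jk jX].
  apply/negPn/negP => jY; by rewrite (uniq j jX jY) eqxx in jk.
apply/subsetP => j jY; rewrite in_setD1 (subsetP YsX _ jY) andbT.
by apply: contraNneq kY => <-.
Qed.

Local Notation GG := (G R V n m v).
Local Notation SS := (S R V n m v).

Definition Jgood (d : 'rV[R]_n) (X : {set 'I_n}) (J : forall j, {set 'I_(m j)}) :=
  [/\ forall j, j \notin X -> J j = set0,
      forall j, j \in X -> d 0 j = (#|J j|)%:R,
      (\sum_j GG j (J j))%VS = SS X &
      Jtot n m J = rr X ].

Lemma buildJ d X : 0 <= s -> is_vertex R n inPs d -> tW d X ->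
  exists J, Jgood d X J.
Proof.
move=> s0 Vd; have ST := sumT d s0 Vd; have [Pd _] := Vd.
have base : exists J, Jgood d set0 J.
  exists (fun j => set0); split => //.
  - by move=> j; rewrite in_set0.
  - by rewrite S_set0; apply: big1 => j _; rewrite G0.
  - by rewrite r_set0 /Jtot; apply: big1 => j _; rewrite cards0.
suff H : forall N (X : {set 'I_n}), (#|X| <= N)%N -> tW d X -> exists J, Jgood d X J.
  by move=> tX; exact: H _ X (leqnn _) tX.
elim=> [|N IH] {}X cX tX.
  by move: cX; rewrite leqn0 => /eqP/cards0_eq ->.
case: (eqVneq X set0) => [->|X0] //.
have [k kX tXk] := step d X s0 Vd tX X0.
have cXk : (#|X :\ k| <= N)%N.
  by move: cX; rewrite (cardsD1 k X) kX add1n ltnS.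
have [J0 [J0out J0val J0span J0tot]] := IH _ cXk tXk.
have [A HA] := fin_all_exists (fun j => LA R V n m v (SS (X :\ k)) j).
pose J := fun j => if j == k then A j else J0 j.
have J0k : J0 k = set0 by apply: J0out; rewrite setD11.
have [HAs HAd] := HA k.
have SX : SS X = (Vsp R V n m v k + SS (X :\ k))%VS by rewrite -S_setU1 setD1K.
have rX : rr X = (rr (X :\ k) + #|A k|)%N.
  by rewrite /r SX addvC -HAs HAd.
exists J; split.
- move=> j jX; rewrite /J; case: eqP => [E|/eqP jk]; first by rewrite E kX in jX.
  by apply: J0out; rewrite in_setD1 (negbTE jX) andbF.
- move=> j jX; rewrite /J; case: eqP => [->|/eqP jk].
    move: tX tXk; rewrite /tW /sumd (big_setD1 _ kX) /= rX natrD => /eqP h1 /eqP h2.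
    lra.
  by apply: J0val; rewrite in_setD1 jk jX.
- rewrite (bigD1 k) //= /J eqxx.
  rewrite (eq_bigr (fun j => GG j (J0 j))); last by move=> j /negbTE ->.
  have : (\sum_j GG j (J0 j))%VS = (GG k (J0 k) + \sum_(j | j != k) GG j (J0 j))%VS.
    by rewrite (bigD1 k).
  rewrite J0k G0 add0v J0span => <-.
  by rewrite addvC HAs SX addvC.
- rewrite /Jtot (bigD1 k) //= /J eqxx.
  rewrite (eq_bigr (fun j => #|J0 j|)); last by move=> j /negbTE ->.
  have : Jtot n m J0 = (#|J0 k| + \sum_(j | j != k) #|J0 j|)%N.
    by rewrite /Jtot (bigD1 k).
  rewrite J0k cards0 add0n J0tot => <-.
  by rewrite rX addnC.
Qed.

Lemma finalJ d (U : {set 'I_n}) i : 0 <= s -> is_vertex R n inPs d -> tW d U ->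
  i \notin U -> (forall l, l \notin U -> l != i -> d 0 l = 0) ->
  d 0 i = s - (rr U)%:R -> s <= (rr (i |: U))%:R ->
  exists (J : forall i : 'I_n, {set 'I_(m i)}) (i' : 'I_n),
    inJbar R V n m v s J i' /\ d = Jhat R n m s J i'.
Proof.
move=> s0 Vd tU iU Hout di sU; have ST := sumT d s0 Vd; have [Pd _] := Vd.
have [J0 [J0out J0val J0span J0tot]] := buildJ d U s0 Vd tU.
have [A HA] := fin_all_exists (fun j => LA R V n m v (SS U) j).
pose J := fun j => if j == i then A j else J0 j.
have J0i : J0 i = set0 by apply: J0out.
have [HAs HAd] := HA i.
have Jsp : (\sum_j GG j (J j))%VS = (GG i (A i) + SS U)%VS.
  rewrite (bigD1 i) //= /J eqxx.
  rewrite (eq_bigr (fun j => GG j (J0 j))); last by move=> j /negbTE ->.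
  have : (\sum_j GG j (J0 j))%VS = (GG i (J0 i) + \sum_(j | j != i) GG j (J0 j))%VS.
    by rewrite (bigD1 i).
  by rewrite J0i G0 add0v J0span => <-.
have Jt : Jtot n m J = (#|A i| + rr U)%N.
  rewrite /Jtot (bigD1 i) //= /J eqxx.
  rewrite (eq_bigr (fun j => #|J0 j|)); last by move=> j /negbTE ->.
  have : Jtot n m J0 = (#|J0 i| + \sum_(j | j != i) #|J0 j|)%N.
    by rewrite /Jtot (bigD1 i).
  by rewrite J0i cards0 add0n J0tot => <-.
have rU : rr (i |: U) = Jtot n m J.
  by rewrite Jt /r S_setU1 addvC -HAs HAd addnC.
have Ed : d = Jhat R n m s J i.
  apply/rowP => k; rewrite !mxE.
  case: (eqVneq k i) => [->|ki].
    by rewrite /J eqxx Jt natrD di (_ : true%:R = 1 :> R) // mul1r; ring.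
  rewrite (_ : false%:R = 0 :> R) // mul0r addr0 /J (negbTE ki).
  case kU: (k \in U); first exact: J0val.
  by rewrite J0out ?kU // cards0 Hout ?kU.
exists J, i; split => //; split.
  split; last by rewrite -rU.
  by rewrite /free span_Jfam size_Jfam Jsp addvC HAd Jt addnC.
by move=> k; rewrite -Ed; case: Pd.
Qed.

Lemma main_sec : (0 < n)%N -> 0 <= s ->
  forall d : 'rV[R]_n, is_vertex R n inPs d ->
  exists (J : forall i : 'I_n, {set 'I_(m i)}) (i : 'I_n),
    inJbar R V n m v s J i /\ d = Jhat R n m s J i.
Proof.
move=> n0 s0 d Vd; have ST := sumT d s0 Vd; have [Pd _] := Vd.
case: (eqVneq (setT : {set 'I_n}) set0) => [T0|T0].
  by have := in_setT (Ordinal n0); rewrite T0 in_set0.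
pose P := fun W => tW d W.
have P0 : P set0 by apply: tW0.
case: (arg_maxnP (fun W : {set 'I_n} => #|W|) P0) => M tM Mmax.
have sub : forall W, tW d W -> W \subset M.
  move=> W tWW; have [tU _] := tW_closed _ _ _ Pd ST tWW tM.
  have H := Mmax (W :|: M) tU.
  have /eqP E : M == W :|: M by rewrite eqEcard subsetUr; exact: H.
  by rewrite E subsetUl.
case: (eqVneq M setT) => [MT|MT].
  have tT : tW d setT by rewrite -MT.
  have [k _ tU] := step d setT s0 Vd tT T0.
  apply: (finalJ d (setT :\ k) k s0 Vd tU).
  - by rewrite setD11.
  - by move=> l; rewrite in_setD1 in_setT andbT negbK => ->.
  - move: tU; rewrite /tW => /eqP <-.
    by rewrite -ST /sumd (big_setD1 _ (in_setT k)) /=; ring.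
  - by rewrite setD1K ?in_setT // -ST; apply: le_r.
have [i iM Hi] : exists2 i, i \notin M & forall l, l \notin M -> l != i -> d 0 l = 0.
  case: (pickP (fun l => (l \notin M) && (d 0 l != 0))) => [i /andP [iM di] | none].
    exists i => // l lM li; apply/eqP/negPn/negP => dl.
    pose z := ev i - ev l.
    have : z = 0.
      apply: (@perturbW d z s0 Vd).
      - move=> j dj; rewrite !mxE.
        have ji : j != i by apply/eqP => E; move: di; rewrite -E dj eqxx.
        have jl : j != l by apply/eqP => E; move: dl; rewrite -E dj eqxx.
        by rewrite (negbTE ji) (negbTE jl) subrr.
      - rewrite (eq_bigr (fun j => ev i 0 j - ev l 0 j)); last by move=> j _; rewrite !mxE.
        by rewrite sumrB !ev_sumT subrr.
      move=> W tWW.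
      rewrite (eq_bigr (fun j => ev i 0 j - ev l 0 j)); last by move=> j _; rewrite !mxE.
      rewrite sumrB !ev_sumin.
      have iW : i \notin W by apply: contra iM; apply: (subsetP (sub W tWW)).
      have lW : l \notin W by apply: contra lM; apply: (subsetP (sub W tWW)).
      by rewrite (negbTE iW) (negbTE lW) subrr.
    move/rowP/(_ i); rewrite !mxE eqxx.
    have : (i == l) = false by apply/negP => /eqP E; rewrite E eqxx in li.
    by move=> ->; rewrite subr0 => /eqP; rewrite oner_eq0.
  have [i iM] : exists i, i \notin M.
    apply/existsP; apply: contraNT MT => /existsPn H.
    by apply/eqP/setP => j; rewrite in_setT; apply/negPn; apply: H.
  exists i => // l lM _; apply/eqP; have := none l; rewrite lM /=; by move/negbT/negPn.
have Ei : \sum_(k in ~: M) d 0 k = d 0 i.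
  rewrite (@sum_sub _ [set i]); first by rewrite big_set1.
    by rewrite sub1set in_setC.
  move=> k; rewrite in_setC in_set1 => kM ki; exact: Hi.
apply: (finalJ d M i s0 Vd tM iM Hi).
  move: tM; rewrite /tW => /eqP <-.
  move: ST; rewrite sumdT (sumC _ M) Ei /sumd => <-; ring.
have : sumd d (i |: M) = s.
  by rewrite /sumd big_setU1 //= -ST sumdT (sumC _ M) Ei addrC.
by move=> <-; apply: le_r.
Qed.

End Poly.

Theorem mainTheorem4 (R : realFieldType) (V : vectType R) (n : nat)
  (m : 'I_n -> nat) (v : forall i : 'I_n, 'I_(m i) -> V) (s : R) :
  (0 < n)%N -> 0 <= s ->
  forall d : 'rV[R]_n, is_vertex R n (inP R V n m v s) d ->
  exists (J : forall i : 'I_n, {set 'I_(m i)}) (i : 'I_n),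
    inJbar R V n m v s J i /\ d = Jhat R n m s J i.
Proof. exact: main_sec. Qed.
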